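(* Let $\phi$ satisfy $B_\phi>0$. For every centred symmetric probability distribution $\mu$ on $\mathbb{R}$ with $\mu_2=1$ and $\mu_6<\infty$ and every $\mathfrak g\in\mathbb{R}$, $$\theta^2\ \ge\ \frac{1}{144}\Big(A_\phi-\frac{C_\phi^2}{B_\phi}\Big)\ \ge 0 .$$ Moreover the bound is approached: if $\mu_4>1$, $\mu_6=\mu_4^2$ and $\mathfrak g=\dfrac{\mu_4(C_\phi-3B_\phi)+6B_\phi}{12B_\phi(\mu_4-1)}$, then $\theta^2=\frac{\mu_4^2}{144}(A_\phi-C_\phi^2/B_\phi)$, which tends to the lower bound as $\mu_4\downarrow1$. For $a>1$, the symmetric distribution $\nu(a)$ on $\{-\sqrt a,0,\sqrt a\}$ with $\nu(a)(\{\pm\sqrt a\})=1/(2a)$ satisfies $\mu_2=1$, $\mu_4=a$, $\mu_6=a^2$.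
   Context: Here $\pi=e^\phi$ is a probability density on $\mathbb{R}$ with $A_\phi=\mathbb{E}_\pi[(\phi''')^2]$, $B_\phi=\mathbb{E}_\pi[(\phi'\phi'')^2]$, $C_\phi=\mathbb{E}_\pi[\phi'\phi''\phi''']$ finite, $\mu_k=\int z^k\mu(dz)$, and $\theta^2=\mu_6\{\tfrac{1}{144}A_\phi+(\tfrac14+\mathfrak g)^2B_\phi-\tfrac16(\tfrac14+\mathfrak g)C_\phi\}+\mu_4\{\tfrac16(\tfrac12+\mathfrak g)C_\phi-2(\tfrac14+\mathfrak g)(\tfrac12+\mathfrak g)B_\phi\}+(\tfrac12+\mathfrak g)^2B_\phi$, where $\mathfrak g$ plays the role of $g''(1)$ for the balancing function $g$. *)

(* Defs.v *)
From HB Require Import structures.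
From mathcomp Require Import all_boot all_order all_algebra.
From mathcomp Require Import all_classical all_reals all_analysis.
Set Implicit Arguments. Unset Strict Implicit. Unset Printing Implicit Defensive.
Import Order.TTheory GRing.Theory Num.Theory.
Import numFieldNormedType.Exports.
Local Open Scope classical_set_scope.
Local Open Scope ring_scope.

Section defs.
Variable R : realType.

Definition thrice_derivable (phi : R -> R) : Prop :=
  forall x, derivable phi x 1 /\ derivable (derive1n 1 phi) x 1 /\
            derivable (derive1n 2 phi) x 1.

Definition is_log_density (phi : R -> R) : Prop :=
  (\int[@lebesgue_measure R]_x (expR (phi x))%:E = 1)%E.

Definition pi_integrable (phi f : R -> R) : Prop :=
  (@lebesgue_measure R).-integrable setT (fun x => (expR (phi x) * f x)%:E).

Definition Epi (phi f : R -> R) : R :=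
  fine (\int[@lebesgue_measure R]_x (expR (phi x) * f x)%:E).

Definition f_A (phi : R -> R) := fun x => (derive1n 3 phi x) ^+ 2.
Definition f_B (phi : R -> R) :=
  fun x => (derive1n 1 phi x * derive1n 2 phi x) ^+ 2.
Definition f_C (phi : R -> R) :=
  fun x => derive1n 1 phi x * derive1n 2 phi x * derive1n 3 phi x.

Definition A_phi phi := Epi phi (f_A phi).
Definition B_phi phi := Epi phi (f_B phi).
Definition C_phi phi := Epi phi (f_C phi).

Definition moment (mu : probability R R) (k : nat) : R :=
  fine (\int[mu]_x (x ^+ k)%:E).

Definition symmetric_prob (mu : probability R R) : Prop :=
  forall A : set R, measurable A -> mu ((fun x => - x) @^-1` A) = mu A.

Definition centred (mu : probability R R) : Prop :=
  (\int[mu]_x x%:E = 0)%E.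

(* theta^2 as a function of A, B, C, g = g''(1), mu_4, mu_6 *)
Definition theta2 (A B C g m4 m6 : R) : R :=
  m6 * (A / 144 + (1/4 + g) ^+ 2 * B - (1/6) * (1/4 + g) * C)
  + m4 * ((1/6) * (1/2 + g) * C - 2 * (1/4 + g) * (1/2 + g) * B)
  + (1/2 + g) ^+ 2 * B.

End defs.

(* Main.v *)
Require Import Defs.
From HB Require Import structures.
From mathcomp Require Import all_boot all_order all_algebra.
From mathcomp Require Import all_classical all_reals all_analysis.
From mathcomp Require Import lra ring.
From mathcomp Require Import measurable_realfun.
Import Order.TTheory GRing.Theory Num.Theory.
Import numFieldNormedType.Exports.
Local Open Scope classical_set_scope.
Local Open Scope ring_scope.
Lemma int_finE {d} {T : measurableType d} {R : realType}
  {m : {measure set T -> \bar R}} {f : T -> R} :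
  m.-integrable setT (fun x => (f x)%:E) ->
  (\int[m]_x (f x)%:E = (fine (\int[m]_x (f x)%:E))%:E)%E.
Proof. by move=> h; rewrite fineK //; apply: integrable_fin_num. Qed.

Lemma quad_nonneg d (T : measurableType d) (R : realType)
  (m : {measure set T -> \bar R}) (f g h : T -> R) (t : R) :
  m.-integrable setT (fun x => (f x)%:E) ->
  m.-integrable setT (fun x => (g x)%:E) ->
  m.-integrable setT (fun x => (h x)%:E) ->
  (forall x, 0 <= t ^+ 2 * f x + 2 * t * g x + h x) ->
  0 <= t ^+ 2 * fine (\int[m]_x (f x)%:E) + 2 * t * fine (\int[m]_x (g x)%:E)
       + fine (\int[m]_x (h x)%:E).
Proof.
move=> If Ig Ih H.
have := @integral_ge0 _ _ _ m setT (fun x => (t ^+ 2 * f x + 2 * t * g x + h x)%:E).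
have -> : (fun x => (t ^+ 2 * f x + 2 * t * g x + h x)%:E) =
   (fun x => ((t ^+ 2)%:E * (f x)%:E + (2 * t)%:E * (g x)%:E) + (h x)%:E)%E.
  by apply: funext => x.
rewrite integralD //; last first.
  by apply: integrableD => //; apply: integrableZl.
rewrite integralD //; try by apply: integrableZl.
rewrite !integralZl // (int_finE If) (int_finE Ig) (int_finE Ih).
rewrite -!EFinM -!EFinD lee_fin; apply => x _; exact: H.
Qed.

Lemma int_pow (R : realType) (mu : probability R R) (k : nat) :
  (k = 2 \/ k = 4)%N ->
  mu.-integrable setT (fun x => (x ^+ 6)%:E) ->
  mu.-integrable setT (fun x : R => (x ^+ k)%:E).
Proof.
move=> hk I6.
have Ic := @finite_measure_integrable_cst _ _ _ mu setT 1 measurableT.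
apply: (le_integrable measurableT _ _ (integrableD measurableT Ic I6)).
  by apply/measurable_realfun.measurable_EFinP; exact: measurable_realfun.exprn_measurable.
move=> x _ /=; rewrite lee_fin.
have h0 : 0 <= x ^+ 2 by rewrite sqr_ge0.
have e6 : x ^+ 6 = (x ^+ 2) ^+ 3 by rewrite -exprM.
have e4 : x ^+ 4 = (x ^+ 2) ^+ 2 by rewrite -exprM.
set y := x ^+ 2 in h0 e6 e4 *.
have p6 : 0 <= 1 + x ^+ 6 by rewrite e6 addr_ge0 // exprn_ge0.
rewrite (ger0_norm p6) e6.
case: hk => ->; rewrite -/y ?e4 ger0_norm ?sqr_ge0 //;
  rewrite ?exprS ?expr0 ?mulr1; have [y1|y1] := lerP y 1; nra.
Qed.

Lemma moment2 (R : realType) (mu : probability R R) :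
  (\int[mu]_x (x ^+ 2)%:E = 1)%E -> moment mu 2 = 1.
Proof. by rewrite /moment => ->. Qed.

Lemma moment0 (R : realType) (mu : probability R R) :
  fine (\int[mu]_x (1:R)%:E) = 1.
Proof. rewrite integral_cst // mul1e. exact: (congr1 fine (probability_setT mu)). Qed.

Lemma moments_ineq (R : realType) (mu : probability R R) :
  (\int[mu]_x (x ^+ 2)%:E = 1)%E ->
  mu.-integrable setT (fun x => (x ^+ 6)%:E) ->
  1 <= moment mu 4 /\ moment mu 4 ^+ 2 <= moment mu 6.
Proof.
move=> h2 I6.
have I2 := @int_pow _ mu 2 (or_introl erefl) I6.
have I4 := @int_pow _ mu 4 (or_intror erefl) I6.
have Ic := @finite_measure_integrable_cst _ _ _ mu setT 1 measurableT.
rewrite /moment; split.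
  have := @quad_nonneg _ _ _ mu (fun=> 1) (fun x => x ^+ 2) (fun x => x ^+ 4) (-1) Ic I2 I4.
  rewrite moment0 h2 /=.
  have P : forall x : R, 0 <= (-1) ^+ 2 * 1 + 2 * -1 * x ^+ 2 + x ^+ 4.
    move=> x; have -> : (-1) ^+ 2 * 1 + 2 * -1 * x ^+ 2 + x ^+ 4 = (x ^+ 2 - 1) ^+ 2 by ring.
    exact: sqr_ge0.
  by move=> /(_ P); lra.
have := @quad_nonneg _ _ _ mu (fun x => x ^+ 2) (fun x => x ^+ 4) (fun x => x ^+ 6)
  (- fine (\int[mu]_x (x ^+ 4)%:E)) I2 I4 I6.
rewrite h2 /=.
set m4 := fine _.
have P : forall x : R, 0 <= (- m4) ^+ 2 * x ^+ 2 + 2 * - m4 * x ^+ 4 + x ^+ 6.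
  move=> x; have -> : (- m4) ^+ 2 * x ^+ 2 + 2 * - m4 * x ^+ 4 + x ^+ 6 = (x ^+ 3 - m4 * x) ^+ 2 by ring.
  exact: sqr_ge0.
by move=> /(_ P); lra.
Qed.

Lemma theta_id (R : realType) (A B C g m4 m6 : R) : B != 0 -> m6 != 0 ->
  theta2 A B C g m4 m6 - (A - C ^+ 2 / B) / 144 =
  (m6 - 1) * (A - C ^+ 2 / B) / 144 + B * (1/2 + g) ^+ 2 * (m6 - m4 ^+ 2) / m6
  + B / m6 * (m6 * (1/4 + g) - m4 * (1/2 + g) - C * m6 / (12 * B)) ^+ 2.
Proof. move=> hB h6; rewrite /theta2; field; rewrite hB h6 //. Qed.

Lemma theta_lb (R : realType) (A B C g m4 m6 : R) : 0 < B ->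
  0 <= A - C ^+ 2 / B -> 1 <= m4 -> m4 ^+ 2 <= m6 ->
  (A - C ^+ 2 / B) / 144 <= theta2 A B C g m4 m6.
Proof.
move=> hB hK h4 h6.
have h6' : 1 <= m6 by apply: le_trans h6; rewrite -[1](expr1n _ 2) ler_pXn2r // ?nnegrE //; lra.
rewrite -subr_ge0 theta_id ?gt_eqF //; last by lra.
apply: addr_ge0; [apply: addr_ge0|].
- by apply: divr_ge0 => //; apply: mulr_ge0 => //; lra.
- apply: divr_ge0; last by lra.
  by apply: mulr_ge0; [apply: mulr_ge0; [lra|apply: sqr_ge0]|lra].
- by apply: mulr_ge0; [apply: divr_ge0; lra|apply: sqr_ge0].
Qed.

Lemma theta_eq (R : realType) (A B C m4 : R) : B != 0 -> 1 < m4 ->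
  theta2 A B C ((m4 * (C - 3 * B) + 6 * B) / (12 * B * (m4 - 1))) m4 (m4 ^+ 2)
   = m4 ^+ 2 / 144 * (A - C ^+ 2 / B).
Proof.
move=> hB h4; rewrite /theta2; field.
have : m4 - 1 != 0 by rewrite subr_eq0 gt_eqF.
by rewrite hB => ->.
Qed.

Lemma CS_pi (R : realType) (phi : R -> R) :
  pi_integrable phi (f_A phi) -> pi_integrable phi (f_B phi) ->
  pi_integrable phi (f_C phi) -> 0 < B_phi phi ->
  0 <= A_phi phi - C_phi phi ^+ 2 / B_phi phi.
Proof.
move=> hA hB hC hBp.
set t := - C_phi phi / B_phi phi.
have := @quad_nonneg _ _ _ (@lebesgue_measure R) _ _ _ t hB hC hA.
have P : forall x, 0 <= t ^+ 2 * (expR (phi x) * f_B phi x) +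
   2 * t * (expR (phi x) * f_C phi x) + expR (phi x) * f_A phi x.
  move=> x; rewrite /f_A /f_B /f_C.
  have -> : t ^+ 2 * (expR (phi x) * (derive1n 1 phi x * derive1n 2 phi x) ^+ 2) +
    2 * t * (expR (phi x) * (derive1n 1 phi x * derive1n 2 phi x * derive1n 3 phi x)) +
    expR (phi x) * derive1n 3 phi x ^+ 2 =
    expR (phi x) * (t * (derive1n 1 phi x * derive1n 2 phi x) + derive1n 3 phi x) ^+ 2 by ring.
  by apply: mulr_ge0; [apply: expR_ge0|apply: sqr_ge0].
move=> /(_ P).
rewrite -/(Epi phi (f_A phi)) -/(Epi phi (f_B phi)) -/(Epi phi (f_C phi)).
rewrite -/(A_phi phi) -/(B_phi phi) -/(C_phi phi) /t.
set A := A_phi phi; set B := B_phi phi; set C := C_phi phi.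
have -> : (- C / B) ^+ 2 * B + 2 * (- C / B) * C + A = A - C ^+ 2 / B.
  by field; rewrite gt_eqF.
done.
Qed.

Lemma lim_part (R : realType) (K : R) :
  ((fun t : R => t ^+ 2 / 144 * K) @ 1^'+ --> K / 144).
Proof.
apply: cvg_at_right_filter.
have -> : K / 144 = 1 ^+ 2 / 144 * K by rewrite expr1n mul1r mulrC.
apply: cvgM; last exact: cvg_cst.
apply: cvgM; last exact: cvg_cst.
exact: exprn_continuous.
Qed.

Lemma int_set1 (R : realType) (nu : probability R R) (f : R -> R) (r : R) :
  (\int[nu]_(x in [set r]) (f x)%:E = (f r)%:E * nu [set r])%E.
Proof.
transitivity (\int[nu]_(x in [set r]) (cst (f r)%:E) x)%E.
  by apply: eq_integral => x; rewrite inE => ->.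
by rewrite integral_cst.
Qed.

Lemma pU (R : realType) (nu : probability R R) (A B : set R) : measurable A -> measurable B -> A `&` B = set0 ->
  nu (A `|` B) = (nu A + nu B)%E.
Proof. move=> mA mB d; exact: measureU. Qed.

Lemma pC (R : realType) (nu : probability R R) (A : set R) : measurable A -> nu A = 1%E -> nu (~` A) = 0%E.
Proof.
move=> mA h.
have e : nu setT = (nu A + nu (~` A))%E.
  by rewrite -(setUv A) pU //; [apply: measurableC | rewrite setICr].
have fin : nu (~` A) \is a fin_num by apply: fin_num_measure; apply: measurableC.
have := fineK fin; move: (fine _) => x hx.
have e1 : nu setT = 1%E := probability_setT nu.
rewrite -hx e1 h -EFinD in e *.
have e2 := EFin_inj e.
by congr (_%:E); lra.
Qed.

Lemma three_pt (R : realType) (a : R) (ha : 1 < a) (nu : probability R R)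
  (h1 : nu [set Num.sqrt a] = (1 / (2 * a))%:E)
  (h2 : nu [set - Num.sqrt a] = (1 / (2 * a))%:E)
  (h3 : nu [set 0] = (1 - 1 / a)%:E)
  (f : R -> R) (mf : measurable_fun setT f) :
  (\int[nu]_x (f x)%:E =
   (f (Num.sqrt a) * (1 / (2 * a)) + f (- Num.sqrt a) * (1 / (2 * a))
    + f 0 * (1 - 1 / a))%:E)%E.
Proof.
set p := Num.sqrt a in h1 h2 *.
have pp : 0 < p by rewrite sqrtr_gt0; lra.
have pnq : p <> - p by move=> e; lra.
have pn0 : p <> 0 by move=> e; lra.
have qn0 : - p <> 0 by move=> e; lra.
set S1 := [set p] `|` [set - p].
set S := S1 `|` [set 0].
have mS1 : measurable S1 by apply: measurableU.
have mS : measurable S by apply: measurableU.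
have d1 : [set p] `&` [set - p] = set0.
  by apply/seteqP; split => // x [/= -> ]; apply: pnq.
have d2 : S1 `&` [set 0] = set0.
  by apply/seteqP; split => // x [[/= ->|/= ->]] /=; [apply: pn0|apply: qn0].
have d1' : [disjoint [set p] & [set - p]] by apply/disj_setPS; rewrite d1.
have d2' : [disjoint S1 & [set 0]] by apply/disj_setPS; rewrite d2.
have nuS : nu S = 1%E.
  rewrite /S pU // /S1 pU // h1 h2 h3 -!EFinD; congr (_%:E).
  by field; lra.
have nuC : nu (~` S) = 0%E by apply: pC.
have mfE : measurable_fun setT (EFin \o f) by apply/measurable_realfun.measurable_EFinP.
have mfS : forall D, measurable_fun D (fun x => (f x)%:E).
  by move=> D; apply: measurable_funTS.
rewrite -(setUv S) integral_setU //; try exact: mfS;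
  try (by apply/disj_setPS; rewrite setICr); try (by apply: measurableC).
rewrite [X in (_ + X)%E]null_set_integral //; try exact: mfS; try (by apply: measurableC).
rewrite adde0 /S integral_setU //.
rewrite /S1 integral_setU //.
by rewrite !int_set1 h1 h2 h3 -!EFinM -!EFinD.
Qed.

Lemma part4 (R : realType) (a : R) : 1 < a -> forall nu : probability R R,
     nu [set Num.sqrt a] = (1 / (2 * a))%:E ->
     nu [set - Num.sqrt a] = (1 / (2 * a))%:E ->
     nu [set 0] = (1 - 1 / a)%:E ->
     symmetric_prob nu /\ centred nu /\
     (\int[nu]_x (x ^+ 2)%:E = 1)%E /\
     (\int[nu]_x (x ^+ 4)%:E = a%:E)%E /\
     (\int[nu]_x (x ^+ 6)%:E = (a ^+ 2)%:E)%E.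
Proof.
move=> ha nu h1 h2 h3.
have T := @three_pt R a ha nu h1 h2 h3.
set p := Num.sqrt a in T *.
have p2 : p ^+ 2 = a by rewrite sqr_sqrtr //; lra.
have n2 : (- p) ^+ 2 = a by rewrite sqrrN.
have key : forall B, measurable B -> nu B =
   (\1_B p * (1 / (2 * a)) + \1_B (- p) * (1 / (2 * a)) + \1_B 0 * (1 - 1 / a))%:E.
  move=> B mB; transitivity (\int[nu]_x (\1_B x)%:E)%E.
    by rewrite integral_indic // setIT.
  by apply: T; apply: measurable_indic.
split.
  move=> A mA.
  have mP : measurable ((fun x : R => - x) @^-1` A).
    by have := @oppr_measurable R setT measurableT A mA; rewrite setTI.
  rewrite (key _ mP) (key _ mA); congr (_%:E).
  rewrite /indic /=.
  have E : forall x : R, (x \in [eta -%R] @^-1` A) = (- x \in A) by [].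
  rewrite !E opprK oppr0; lra.
split.
  rewrite /centred (T (fun x => x)) //; congr (_%:E); field; lra.
split.
  rewrite (T (fun x => x ^+ 2)) //; congr (_%:E); rewrite p2 n2 expr0n /=; field; lra.
split.
  rewrite (T (fun x => x ^+ 4)) //; congr (_%:E).
  rewrite (_ : 4 = 2 * 2)%N // !exprM p2 n2 expr0n /=; field; lra.
rewrite (T (fun x => x ^+ 6)) //; congr (_%:E).
rewrite (_ : 6 = 2 * 3)%N // !exprM p2 n2 expr0n /=; field; lra.
Qed.
Theorem proposition5 (R : realType) (phi : R -> R)
  (hphi : thrice_derivable phi)
  (hdens : is_log_density phi)
  (hA : pi_integrable phi (f_A phi))
  (hB : pi_integrable phi (f_B phi))
  (hC : pi_integrable phi (f_C phi))
  (hBpos : 0 < B_phi phi) :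
  let A := A_phi phi in let B := B_phi phi in let C := C_phi phi in
  (* lower bound *)
  (forall (mu : probability R R) (g : R),
     symmetric_prob mu -> centred mu ->
     (\int[mu]_x (x ^+ 2)%:E = 1)%E ->
     mu.-integrable setT (fun x => (x ^+ 6)%:E) ->
     theta2 A B C g (moment mu 4) (moment mu 6) >= (A - C ^+ 2 / B) / 144
     /\ (A - C ^+ 2 / B) / 144 >= 0)
  /\
  (* the bound is approached *)
  (forall (mu : probability R R) (g : R),
     symmetric_prob mu -> centred mu ->
     (\int[mu]_x (x ^+ 2)%:E = 1)%E ->
     mu.-integrable setT (fun x => (x ^+ 6)%:E) ->
     1 < moment mu 4 -> moment mu 6 = moment mu 4 ^+ 2 ->
     g = (moment mu 4 * (C - 3 * B) + 6 * B) / (12 * B * (moment mu 4 - 1)) ->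
     theta2 A B C g (moment mu 4) (moment mu 6)
       = moment mu 4 ^+ 2 / 144 * (A - C ^+ 2 / B))
  /\
  ((fun t : R => t ^+ 2 / 144 * (A - C ^+ 2 / B)) @ 1^'+
     --> (A - C ^+ 2 / B) / 144)
  /\
  (* the three-point distributions nu(a) *)
  (forall (a : R), 1 < a -> forall nu : probability R R,
     nu [set Num.sqrt a] = (1 / (2 * a))%:E ->
     nu [set - Num.sqrt a] = (1 / (2 * a))%:E ->
     nu [set 0] = (1 - 1 / a)%:E ->
     symmetric_prob nu /\ centred nu /\
     (\int[nu]_x (x ^+ 2)%:E = 1)%E /\
     (\int[nu]_x (x ^+ 4)%:E = a%:E)%E /\
     (\int[nu]_x (x ^+ 6)%:E = (a ^+ 2)%:E)%E).
Proof.
move=> A B C; split; [|split; [|split]].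
- move=> mu g _ _ h2 I6.
  have [m41 m46] := @moments_ineq R mu h2 I6.
  have K := @CS_pi R phi hA hB hC hBpos.
  split; first exact: theta_lb.
  by apply: divr_ge0.
- move=> mu g _ _ h2 I6 h4 h6 ->.
  rewrite h6; apply: theta_eq => //.
  exact: lt0r_neq0.
- exact: lim_part.
- exact: part4.
Qed.
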